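(* Let $V$ be a finite nonempty set of voters and $A$ a finite set of alternatives. (i) If a consular election rule $F:\mathcal{P}(V,A)\to S_2(A)$ satisfies SPP and SPO, then its range graph $\mathcal{G}(F)$ satisfies edge-connectivity. (ii) Conversely, if $G$ is a graph on vertex set $A$ with at least one edge that satisfies edge-connectivity, then there exists a consular election rule $F:\mathcal{P}(V,A)\to S_2(A)$ satisfying SPP and SPO with $\mathcal{G}(F)=G$.
   Context: A profile assigns to each voter $i\in V$ a linear order $P_i$ on $A$; $P_i'P_{-i}$ replaces voter $i$'s order by $P_i'$. $S_2(A)$ is the set of 2-element subsets of $A$; a consular election rule is a map $F:\mathcal{P}(V,A)\to S_2(A)$. SPO: for all $P$, $i$, $P_i'$, $\mathrm{best}(P_i,F(P))\succeq_i\mathrm{best}(P_i,F(P_i'P_{-i}))$; SPP: same with $\mathrm{worst}$, where $\mathrm{best}(P_i,W)$, $\mathrm{worst}(P_i,W)$ are the $P_i$-best and $P_i$-worst elements of $W$. The range graph $\mathcal{G}(F)$ has vertex set $A$ and edge set equal to the range of $F$. A graph satisfies edge-connectivity if whenever $\{a,b\}$ and $\{c,d\}$ are edges with $a,b,c,d$ pairwise distinct, then $\{a,c\}$ or $\{a,d\}$ is an edge, and $\{b,c\}$ or $\{b,d\}$ is an edge. *)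

(* Defs.v *)
From mathcomp Require Import all_boot.
Set Implicit Arguments. Unset Strict Implicit. Unset Printing Implicit Defensive.

(* A (weak-reflexive form of a) linear order on A: x is weakly preferred to y. *)
Record lorder (A : finType) := LOrder {
  lo_rel :> rel A;
  lo_refl : reflexive lo_rel;
  lo_antisym : antisymmetric lo_rel;
  lo_trans : transitive lo_rel;
  lo_total : total lo_rel }.

Definition profile (V A : finType) := V -> lorder A.

Definition upd (V A : finType) (P : profile V A) (i : V) (Pi : lorder A)
  : profile V A := fun j => if j == i then Pi else P j.

Definition pair_set (A : finType) := {W : {set A} | #|W| == 2}.

Definition consular_rule (V A : finType) := profile V A -> pair_set A.

Definition is_best (A : finType) (R : lorder A) (W : {set A}) (x : A) :=
  x \in W /\ forall y, y \in W -> R x y.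
Definition is_worst (A : finType) (R : lorder A) (W : {set A}) (x : A) :=
  x \in W /\ forall y, y \in W -> R y x.

Definition SPO (V A : finType) (F : consular_rule V A) :=
  forall (P : profile V A) (i : V) (Pi' : lorder A) (x y : A),
    is_best (P i) (val (F P)) x -> is_best (P i) (val (F (upd P i Pi'))) y ->
    P i x y.

Definition SPP (V A : finType) (F : consular_rule V A) :=
  forall (P : profile V A) (i : V) (Pi' : lorder A) (x y : A),
    is_worst (P i) (val (F P)) x -> is_worst (P i) (val (F (upd P i Pi'))) y ->
    P i x y.

Definition is_graph (A : finType) (G : {set {set A}}) :=
  forall e, e \in G -> #|e| = 2.

Definition range_edge (V A : finType) (F : consular_rule V A) (e : {set A}) :=
  exists P : profile V A, val (F P) = e.

Definition edge_connectivity (A : finType) (E : {set A} -> Prop) :=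
  forall a b c d : A,
    E [set a; b] -> E [set c; d] ->
    a != b -> a != c -> a != d -> b != c -> b != d -> c != d ->
    (E [set a; c] \/ E [set a; d]) /\ (E [set b; c] \/ E [set b; d]).

(* Main.v *)
Require Import Defs.
From mathcomp Require Import all_boot.
From Stdlib Require Import FunctionalExtensionality ClassicalEpsilon.
Set Implicit Arguments. Unset Strict Implicit. Unset Printing Implicit Defensive.

Lemma best_seq (A : finType) (R : rel A) : transitive R -> total R ->
  forall s x0, exists2 x, x \in x0 :: s & forall y, y \in x0 :: s -> R x y.
Proof.
move=> Rtr Rto; elim=> [|z s IH] x0.
  exists x0; first by rewrite inE.
  move=> y; rewrite inE => /eqP ->. by have := Rto x0 x0; rewrite orbb.
have [b hb1 hb2] := IH z.
case: (boolP (R x0 b)) => h.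
  exists x0; first by rewrite inE eqxx.
  move=> y; rewrite inE => /orP [/eqP -> | hy]; first by have := Rto x0 x0; rewrite orbb.
  exact: (Rtr _ _ _ h (hb2 y hy)).
exists b; first by rewrite inE hb1 orbT.
move=> y; rewrite inE => /orP [/eqP -> | hy]; last exact: hb2.
by have := Rto x0 b; rewrite (negbTE h).
Qed.

Lemma best_set (A : finType) (R : rel A) : transitive R -> total R ->
  forall S : {set A}, S != set0 -> exists x, x \in S /\ forall y, y \in S -> R x y.
Proof.
move=> tr to S /set0Pn [x0 hx0].
have [x hx1 hx2] := best_seq tr to (enum S) x0.
exists x; split.
  by move: hx1; rewrite inE mem_enum => /orP [/eqP -> |].
by move=> y hy; apply: hx2; rewrite inE mem_enum hy orbT.
Qed.

Lemma ltr (A : finType) (L : lorder A) x y z : L x y -> L y z -> L x z.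
Proof. move=> h1 h2; exact: (@lo_trans _ L y x z h1 h2). Qed.

Lemma lanti (A : finType) (L : lorder A) x y : L x y -> L y x -> x = y.
Proof. move=> h1 h2; apply: (@lo_antisym _ L); by rewrite h1 h2. Qed.

Lemma pair_n0 (A : finType) (W : {set A}) : #|W| = 2 -> W != set0.
Proof. by move=> h; rewrite -card_gt0 h. Qed.

Lemma best_ex (A : finType) (L : lorder A) (W : {set A}) : W != set0 ->
  exists x, is_best L W x.
Proof. exact: best_set (@lo_trans _ L) (@lo_total _ L) W. Qed.

Lemma worst_ex (A : finType) (L : lorder A) (W : {set A}) : W != set0 ->
  exists x, is_worst L W x.
Proof.
apply: (@best_set _ (fun x y => L y x)).
  by move=> y x z h1 h2; exact: ltr h2 h1.
by move=> x y; rewrite orbC; apply: lo_total.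
Qed.

Lemma pval2 (A : finType) (W : pair_set A) : #|val W| = 2.
Proof. exact/eqP/(valP W). Qed.

Lemma pair_eq (A : finType) (e : {set A}) a y :
  #|e| = 2 -> a \in e -> y \in e -> a != y -> e = [set a; y].
Proof.
move=> he ha hy ne; apply/eqP; rewrite eq_sym eqEcard cards2 ne he andbT.
by apply/subsetP => z; rewrite !inE => /orP [] /eqP ->.
Qed.

Lemma other (A : finType) (e : {set A}) a : #|e| = 2 -> a \in e ->
  exists y, [/\ y \in e, a != y & e = [set a; y]].
Proof.
move=> he ha.
have : 0 < #|e :\ a| by move: he; rewrite (cardsD1 a) ha; case; rewrite add0n => ->.
case/card_gt0P => y; rewrite !inE => /andP [hya hy].
exists y; split => //; first by rewrite eq_sym.
by apply: pair_eq => //; rewrite eq_sym.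
Qed.

Definition rk (A : finType) (s : seq A) (x : A) : nat :=
  if x \in s then index x s else size s + enum_rank x.

Lemma rk_inj (A : finType) (s : seq A) : injective (rk s).
Proof.
move=> x y; rewrite /rk; case: ifP => hx; case: ifP => hy.
- by move=> e; rewrite -(nth_index x hx) e nth_index.
- by have := index_mem x s; rewrite hx => /[swap] ->; rewrite ltnNge leq_addr.
- by have := index_mem y s; rewrite hy => /[swap] <-; rewrite ltnNge leq_addr.
- by move/addnI/ord_inj/enum_rank_inj.
Qed.

Lemma rk_lt (A : finType) (s : seq A) x : (rk s x < size s) = (x \in s).
Proof. by rewrite /rk; case: ifP => h; [rewrite index_mem h | rewrite ltnNge leq_addr]. Qed.

Lemma rk_head (A : finType) (s : seq A) x : rk (x :: s) x = 0.
Proof. by rewrite /rk inE eqxx /= eqxx. Qed.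

Definition mk_lorder (A : finType) (f : A -> nat) (hf : injective f) : lorder A.
Proof.
refine (@LOrder A (fun x y => f x <= f y) _ _ _ _).
- by move=> x; exact: leqnn.
- by move=> x y h; apply: hf; apply/eqP; rewrite eqn_leq.
- by move=> y x z; exact: leq_trans.
- by move=> x y; exact: leq_total.
Defined.

Lemma mkE (A : finType) (f : A -> nat) (hf : injective f) x y :
  mk_lorder hf x y = (f x <= f y).
Proof. by []. Qed.

Definition mix (V A : finType) (P : profile V A) (L : lorder A) (s : seq V) : profile V A :=
  fun j => if j \in s then L else P j.

Lemma induct (V A : finType) (F : consular_rule V A) (L : lorder A)
  (Pr : {set A} -> Prop)
  (step : forall Q i, Pr (val (F Q)) -> Pr (val (F (upd Q i L)))) (P : profile V A) :
  Pr (val (F P)) -> Pr (val (F (fun _ => L))).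
Proof.
move=> h0.
have : forall s, Pr (val (F (mix P L s))).
  elim=> [|x s IH].
    have -> : mix P L [::] = P by apply: functional_extensionality => j.
    exact: h0.
  have -> : mix P L (x :: s) = upd (mix P L s) x L.
    apply: functional_extensionality => j; rewrite /mix /upd inE.
    by case: (j == x).
  exact: step.
move/(_ (enum V)).
have -> // : mix P L (enum V) = (fun _ => L).
by apply: functional_extensionality => j; rewrite /mix mem_enum.
Qed.

Lemma upd_back (V A : finType) (Q : profile V A) i L :
  upd (upd Q i L) i (Q i) = Q.
Proof.
apply: functional_extensionality => j; rewrite /upd.
by case: eqP => [->|].
Qed.

Lemma upd_at (V A : finType) (Q : profile V A) i L : upd Q i L i = L.
Proof. by rewrite /upd eqxx. Qed.

Lemma all_top (V A : finType) (F : consular_rule V A) (hO : SPO F)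
  (L : lorder A) a (ha : forall z, L a z) (P : profile V A) :
  a \in val (F P) -> a \in val (F (fun _ => L)).
Proof.
apply: (induct (Pr := fun W => a \in W)) => Q i haQ.
have [x hx] := best_ex (upd Q i L i) (pair_n0 (pval2 (F (upd Q i L)))).
have hb : is_best (upd Q i L i) (val (F (upd (upd Q i L) i (Q i)))) a.
  by rewrite upd_back upd_at; split.
have := hO _ i (Q i) x a hx hb.
rewrite upd_at => hxa.
have e : x = a by apply: lanti hxa (ha x).
by case: hx; rewrite e.
Qed.

Lemma all_sub (V A : finType) (F : consular_rule V A) (hP : SPP F)
  (L : lorder A) (S : {set A}) (hS : forall x y, y \in S -> L x y -> x \in S)
  (P : profile V A) :
  val (F P) \subset S -> val (F (fun _ => L)) \subset S.
Proof.
apply: (induct (Pr := fun W => W \subset S)) => Q i hQ.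
have [x hx] := worst_ex (upd Q i L i) (pair_n0 (pval2 (F (upd Q i L)))).
have [y hy] := worst_ex (upd Q i L i) (pair_n0 (pval2 (F Q))).
have hy' : is_worst (upd Q i L i) (val (F (upd (upd Q i L) i (Q i)))) y.
  by rewrite upd_back.
have := hP _ i (Q i) x y hx hy'.
rewrite upd_at => hxy.
have hxS : x \in S by apply: hS hxy; apply: (subsetP hQ); case: hy.
apply/subsetP => z hz; apply: (hS z x hxS); case: hx => _ h.
by have := h z hz; rewrite upd_at.
Qed.

Lemma half (V A : finType) (F : consular_rule V A) (hP : SPP F) (hO : SPO F)
  a c d (P1 P2 : profile V A) :
  a \in val (F P1) -> val (F P2) = [set c; d] -> a != c -> a != d -> c != d ->
  range_edge F [set a; c] \/ range_edge F [set a; d].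
Proof.
move=> h1 h2 hac had hcd.
pose s := [:: a; c; d].
pose L := mk_lorder (@rk_inj _ s).
have ha : forall z, L a z by move=> z; rewrite mkE rk_head.
have hR1 := all_top hO ha h1.
have hS : forall x y, y \in [set x | x \in s] -> L x y -> x \in [set x | x \in s].
  move=> x y; rewrite !in_set mkE -!rk_lt => hy hxy; exact: leq_ltn_trans hxy hy.
have hR2 := all_sub hP hS (P := P2).
have /hR2 {}hR2 : val (F P2) \subset [set x | x \in s].
  by rewrite h2; apply/subsetP => z; rewrite !inE => /orP [] /eqP ->; rewrite eqxx ?orbT.
have [z [hz haz e]] := other (pval2 (F (fun _ => L))) hR1.
have := subsetP hR2 z hz; rewrite !inE eq_sym (negbTE haz) /= => /orP [] /eqP ez.
  by left; exists (fun _ => L); rewrite e ez.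
by right; exists (fun _ => L); rewrite e ez.
Qed.

Definition domE (A : finType) (G : {set {set A}}) (L : lorder A) (W : {set A}) :=
  W \in G /\ forall W', W' \in G ->
    (forall x y, is_best L W x -> is_best L W' y -> L x y) /\
    (forall x y, is_worst L W x -> is_worst L W' y -> L x y).

Lemma dom_exists (A : finType) (G : {set {set A}}) (hG : is_graph G) (hG0 : G != set0)
  (hEC : edge_connectivity (fun e => e \in G)) (L : lorder A) :
  exists W, domE G L W.
Proof.
pose S1 := [set x | [exists e in G, x \in e]].
have inS1 : forall e x, e \in G -> x \in e -> x \in S1.
  by move=> e x he hx; rewrite inE; apply/existsP; exists e; rewrite he.
have S1n : S1 != set0.
  case/set0Pn: hG0 => e he.
  case/set0Pn: (pair_n0 (hG e he)) => x hx.
  by apply/set0Pn; exists x; exact: inS1 he hx.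
have [a [ha1 ha2]] := best_set (@lo_trans _ L) (@lo_total _ L) S1n.
pose S2 := [set y | (y != a) && ([set a; y] \in G)].
have S2n : S2 != set0.
  move: ha1; rewrite inE => /existsP [e /andP [he hae]].
  have [y [hy hay ee]] := other (hG e he) hae.
  by apply/set0Pn; exists y; rewrite inE eq_sym hay -ee he.
have [b [hb1 hb2]] := best_set (@lo_trans _ L) (@lo_total _ L) S2n.
move: (hb1); rewrite inE => /andP [hba hab].
exists [set a; b]; split => // W' hW'; split.
  move=> x y [_ hx] [hy _].
  exact: ltr (hx a (set21 a b)) (ha2 y (inS1 W' y hW' hy)).
move=> x y [hx _] [hy hyw].
move: hx; rewrite !inE => /orP [] /eqP ->.
  exact: ha2 y (inS1 W' y hW' hy).
case: (boolP (a \in W')) => haW.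
  have [o [ho hao eo]] := other (hG W' hW') haW.
  have : o \in S2 by rewrite inE eq_sym hao -eo hW'.
  move/hb2 => hbo; exact: ltr hbo (hyw o ho).
case: (boolP (b \in W')) => hbW; first exact: hyw.
have /cards2P [c [d [hcd eW]]] : #|W'| == 2 by rewrite hG.
have hac : a != c by apply: contraNneq haW => ->; rewrite eW set21.
have had : a != d by apply: contraNneq haW => ->; rewrite eW set22.
have hbc : b != c by apply: contraNneq hbW => ->; rewrite eW set21.
have hbd : b != d by apply: contraNneq hbW => ->; rewrite eW set22.
have hW2 : [set c; d] \in G by rewrite -eW.
have hab' : a != b by rewrite eq_sym.
have [[h|h] _] := hEC a b c d hab hW2 hab' hac had hbc hbd hcd.
  have : c \in S2 by rewrite inE eq_sym hac h.
  move/hb2 => hbo; apply: ltr hbo (hyw c _); by rewrite eW set21.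
have : d \in S2 by rewrite inE eq_sym had h.
move/hb2 => hbo; apply: ltr hbo (hyw d _); by rewrite eW set22.
Qed.

Definition of_graph (A : finType) (G : {set {set A}}) (hG : is_graph G)
  (W : {set A}) (h : W \in G) : pair_set A :=
  exist (fun W : {set A} => #|W| == 2) W (introT eqP (hG W h)).

Theorem proposition35 (V A : finType) (hV : 0 < #|V|) :
  (forall F : consular_rule V A,
     SPP F -> SPO F -> edge_connectivity (range_edge F)) /\
  (forall G : {set {set A}},
     is_graph G -> G != set0 -> edge_connectivity (fun e => e \in G) ->
     exists F : consular_rule V A,
       [/\ SPP F, SPO F & forall e, range_edge F e <-> e \in G]).
Proof.
split.
  move=> F hP hO a b c d [P1 e1] [P2 e2] hab hac had hbc hbd hcd; split.
    by apply: (half hP hO (P1 := P1) (P2 := P2)) => //; rewrite e1 set21.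
  by apply: (half hP hO (P1 := P1) (P2 := P2)) => //; rewrite e1 set22.
move=> G hG hG0 hEC.
case/card_gt0P: hV => v0 _.
pose pick := fun L => constructive_indefinite_description _ (dom_exists hG hG0 hEC L).
pose g := fun L => of_graph hG (proj1 (proj2_sig (pick L))).
have hg : forall (L L' : lorder A),
   (forall x y, is_best L (val (g L)) x -> is_best L (val (g L')) y -> L x y) /\
   (forall x y, is_worst L (val (g L)) x -> is_worst L (val (g L')) y -> L x y).
  move=> L L'; exact: (proj2 (proj2_sig (pick L)) _ (proj1 (proj2_sig (pick L')))).
exists (fun P => g (P v0)); split.
- move=> P i Pi' x y hx hy /=; move: hy => /=.
  case: (eqVneq i v0) => [e|ne].
    rewrite e /upd eqxx => hy; rewrite e in hx.
    exact: (proj2 (hg _ _)) hx hy.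
  rewrite /upd eq_sym (negbTE ne) => hy.
  by case: hx => hx _; case: hy => _ h; apply: h.
- move=> P i Pi' x y hx hy /=; move: hy => /=.
  case: (eqVneq i v0) => [e|ne].
    rewrite e /upd eqxx => hy; rewrite e in hx.
    exact: (proj1 (hg _ _)) hx hy.
  rewrite /upd eq_sym (negbTE ne) => hy.
  by case: hy => hy _; case: hx => _ h; apply: h.
move=> e; split.
  by case=> P <-; exact: (proj1 (proj2_sig (pick (P v0)))).
move=> he.
have /cards2P [c [d [hcd ee]]] : #|e| == 2 by rewrite hG.
pose s := [:: c; d].
pose L := mk_lorder (@rk_inj _ s).
exists (fun _ => L) => /=.
set W := sval (pick L).
have [hWG hWd] : domE G L W := proj2_sig (pick L).
have [x hx] := worst_ex L (pair_n0 (hG W hWG)).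
have hdw : is_worst L e d.
  split; first by rewrite ee set22.
  move=> z; rewrite ee !inE => /orP [] /eqP ->; rewrite mkE //.
  by rewrite rk_head.
have hxd := proj2 (hWd e he) x d hx hdw.
have sub : W \subset e.
  apply/subsetP => z hz.
  have hzx : L z x by case: hx => _; apply.
  have := ltr hzx hxd; rewrite mkE => hzd.
  have : rk s z < size s by apply: leq_ltn_trans hzd _; rewrite rk_lt !inE eqxx orbT.
  by rewrite rk_lt ee !inE.
by apply/eqP; rewrite eqEcard sub (hG e he) (hG W hWG).
Qed.
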